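(* Under the setting in the context, assume that for every $r\in\mathcal U^{(1)}_\varepsilon$ the maximum $\max_{\pi\in\Pi_\rho}J_r(\pi)$ is attained, and let $\Pi_\rho^\star(\mathcal U^{(1)}_\varepsilon):=\bigcup_{r\in\mathcal U^{(1)}_\varepsilon}\arg\max_{\pi\in\Pi_\rho}J_r(\pi)$ and $\mathcal C_{\infty,\mathrm{rel}}(\mathcal U^{(1)}_\varepsilon,\pi;\mu,\mathcal D):=\sup_{\beta\in\Pi_\rho^\star(\mathcal U^{(1)}_\varepsilon)}C_{\infty,\mathrm{rel}}(\beta,\pi;\mu,\mathcal D)$. Suppose the true reward $r^\star\in\mathcal U^{(1)}_\varepsilon$, let $\pi_\rho^\star\in\arg\max_{\pi\in\Pi_\rho}J_{r^\star}(\pi)$, and let $$\pi_\rho^{\mathrm{DRRO}}\in\arg\min_{\pi\in\Pi_\rho}\ \sup_{r\in\mathcal U^{(1)}_\varepsilon}\Big[\max_{\beta\in\Pi_\rho}J_r(\beta)-J_r(\pi)\Big]$$ (assumed to exist). Then $$J_{r^\star}(\pi_\rho^\star)-J_{r^\star}(\pi_\rho^{\mathrm{DRRO}})\le2\varepsilon\,\mathcal C_{\infty,\mathrm{rel}}(\mathcal U^{(1)}_\varepsilon,\pi_\rho^\star;\mu,\mathcal D).$$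
   Context: Setting: prompts $x\sim\mathcal D$ on a space $\mathcal X$; a finite response set $\mathcal Y$; reward functions $r:\mathcal X\times\mathcal Y\to\mathbb R$ (measurable, with the expectations below finite), $r(x)\in\mathbb R^{\mathcal Y}$ the promptwise vector; $\hat r$ a fixed proxy reward. $\Pi_\rho$ is a nonempty set of policies (a local policy class); each $\pi\in\Pi_\rho$ has a bounded measurable linear representation $z_\pi(x)\in\mathbb R^{\mathcal Y}$ (e.g. $z_\pi(x)=\pi(\cdot\mid x)$) with $J_r(\pi)=\mathbb E_{x\sim\mathcal D}[\langle z_\pi(x),r(x)\rangle]$. For each $x$, $\mu_x$ is a probability distribution on $\mathcal Y$ with $\mu_x(y)>0$ for all $y$. Weighted norms: $\|e\|_{1,\mu_x}:=\sum_y\mu_x(y)|e(y)|$, $\|v\|_{\infty,\mu_x^{-1}}:=\max_y|v(y)|/\mu_x(y)$. For $\varepsilon>0$, $\mathcal U^{(1)}_\varepsilon:=\{r:\ \mathbb E_{x\sim\mathcal D}[\|r(x)-\hat r(x)\|_{1,\mu_x}]\le\varepsilon\}$. Relative integrated concentrability: $C_{\infty,\mathrm{rel}}(\beta,\pi;\mu,\mathcal D):=\operatorname{ess\,sup}_{x\sim\mathcal D}\|z_\beta(x)-z_\pi(x)\|_{\infty,\mu_x^{-1}}$. *)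

(* Defs.v *)
From HB Require Import structures.
From mathcomp Require Import all_boot all_order all_algebra.
From mathcomp Require Import all_classical all_reals all_analysis.
From mathcomp Require Import ess_sup_inf.
Set Implicit Arguments. Unset Strict Implicit. Unset Printing Implicit Defensive.
Import Order.TTheory GRing.Theory Num.Theory.
Import numFieldNormedType.Exports.
Local Open Scope classical_set_scope.
Local Open Scope ring_scope.

Section RLHF.
Context {d : measure_display} {X : measurableType d} {R : realType} {Y : finType}.

Definition dotY (e v : Y -> R) : R := \sum_(y : Y) e y * v y.

Definition norm1w (mu : Y -> R) (e : Y -> R) : R := \sum_(y : Y) mu y * `|e y|.

(* ||v||_{infty,mu^{-1}} = max_y |v(y)| / mu(y)  (all terms are >= 0) *)
Definition normInfw (mu : Y -> R) (v : Y -> R) : R :=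
  \big[Num.max/0]_(y : Y) (`|v y| / mu y).

(* J_r(pi) = E_{x ~ D} [ <z_pi(x), r(x)> ] (real-valued; finite for admissible r) *)
Definition Jr (P : probability X R) (z : X -> Y -> R) (r : X -> Y -> R) : R :=
  fine (\int[P]_x (dotY (z x) (r x))%:E)%E.

Definition admissible_reward (P : probability X R) {Pol : Type} (Pi : set Pol)
  (z : Pol -> X -> Y -> R) (r : X -> Y -> R) : Prop :=
  (forall y, measurable_fun setT (fun x => r x y)) /\
  (forall pi, Pi pi -> P.-integrable setT (fun x => (dotY (z pi x) (r x))%:E)).

Definition U1 (P : probability X R) {Pol : Type} (Pi : set Pol)
  (z : Pol -> X -> Y -> R) (mu : X -> Y -> R) (rhat : X -> Y -> R) (eps : R)
  : set (X -> Y -> R) :=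
  [set r | admissible_reward P Pi z r /\
     (\int[P]_x (norm1w (mu x) (fun y => r x y - rhat x y))%:E <= eps%:E)%E].

Definition is_argmax (P : probability X R) {Pol : Type} (Pi : set Pol)
  (z : Pol -> X -> Y -> R) (r : X -> Y -> R) (pi : Pol) : Prop :=
  Pi pi /\ forall beta, Pi beta -> Jr P (z beta) r <= Jr P (z pi) r.

Definition PiStar (P : probability X R) {Pol : Type} (Pi : set Pol)
  (z : Pol -> X -> Y -> R) (U : set (X -> Y -> R)) : set Pol :=
  [set pi | exists2 r, U r & is_argmax P Pi z r pi].

Definition Crel (P : probability X R) {Pol : Type} (z : Pol -> X -> Y -> R)
  (mu : X -> Y -> R) (beta pi : Pol) : \bar R :=
  ess_sup P (fun x => (normInfw (mu x) (fun y => z beta x y - z pi x y))%:E).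

Definition CrelU (P : probability X R) {Pol : Type} (Pi : set Pol)
  (z : Pol -> X -> Y -> R) (mu : X -> Y -> R) (U : set (X -> Y -> R)) (pi : Pol)
  : \bar R :=
  ereal_sup [set Crel P z mu beta pi | beta in PiStar P Pi z U].

Definition worst_regret (P : probability X R) {Pol : Type} (Pi : set Pol)
  (z : Pol -> X -> Y -> R) (U : set (X -> Y -> R)) (pi : Pol) : \bar R :=
  ereal_sup [set (ereal_sup [set (Jr P (z beta) r)%:E | beta in Pi]
                  - (Jr P (z pi) r)%:E)%E | r in U].

End RLHF.

(* Main.v *)
Require Import Defs.
From HB Require Import structures.
From mathcomp Require Import all_boot all_order all_algebra.
From mathcomp Require Import all_classical all_reals all_analysis.
From mathcomp Require Import ring lra.
Import Order.TTheory GRing.Theory Num.Theory.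
Local Open Scope classical_set_scope.
Local Open Scope ring_scope.

From mathcomp Require Import ess_sup_inf.
Section H.
Context {R : realType} {Y : finType}.

Lemma normInfw_ge0 (mu v : Y -> R) : (forall y, 0 < mu y) -> 0 <= normInfw mu v.
Proof.
move=> hmu; rewrite /normInfw; apply: (big_ind (fun t => 0 <= t)) => //.
- by move=> a b ha hb; rewrite le_max ha.
- by move=> y _; rewrite divr_ge0 // ltW.
Qed.

Lemma dot_bound (mu e v : Y -> R) : (forall y, 0 < mu y) ->
  `|dotY e v| <= normInfw mu e * norm1w mu v.
Proof.
move=> hmu; rewrite /dotY /norm1w mulr_sumr.
apply: (le_trans (ler_norm_sum _ _ _)); apply: ler_sum => y _.
rewrite normrM mulrA ler_wpM2r //.
have h : `|e y| / mu y <= normInfw mu e by apply: (le_bigmax 0 (fun y => `|e y| / mu y) y).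
have := ler_wpM2r (ltW (hmu y)) h.
by rewrite divfK // gt_eqF.
Qed.

Lemma norm1w_tri (mu a b c : Y -> R) : (forall y, 0 < mu y) ->
  norm1w mu (fun y => a y - b y) <=
  norm1w mu (fun y => a y - c y) + norm1w mu (fun y => b y - c y).
Proof.
move=> hmu; rewrite /norm1w -big_split /=; apply: ler_sum => y _.
rewrite -mulrDr; apply: ler_wpM2l; first exact: ltW.
have -> : a y - b y = (a y - c y) - (b y - c y) by ring.
exact: ler_normB.
Qed.
End H.
Section K.
Context {d : measure_display} {X : measurableType d} {R : realType} {Y : finType}.

Lemma meas_n1 (mu a b : X -> Y -> R) :
  (forall y, measurable_fun setT (fun x => mu x y)) ->
  (forall y, measurable_fun setT (fun x => a x y)) ->
  (forall y, measurable_fun setT (fun x => b x y)) ->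
  measurable_fun setT (fun x => norm1w (mu x) (fun y => a x y - b x y)).
Proof.
move=> hm ha hb; rewrite /norm1w.
apply: measurable_sum => y.
apply: measurable_realfun.measurable_funM => //.
have -> : (fun x => `|a x y - b x y|) = (Num.norm \o (fun x => a x y - b x y)) by [].
apply: measurableT_comp; first exact: measurable_realfun.normr_measurable.
exact: measurable_realfun.measurable_funB.
Qed.

Lemma dotY_lin (a b u v : Y -> R) :
  dotY (fun y => a y - b y) (fun y => u y - v y) =
  dotY a u - dotY b u - (dotY a v - dotY b v).
Proof.
rewrite /dotY -!sumrB; apply: eq_bigr => y _; ring.
Qed.

Lemma key (P : probability X R) (Pol : Type) (Pi : set Pol) (z : Pol -> X -> Y -> R)
  (mu : X -> Y -> R) (rhat r rstar : X -> Y -> R) (eps : R) (beta pi : Pol) :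
  (forall x y, 0 < mu x y) ->
  (forall y, measurable_fun setT (fun x => mu x y)) ->
  admissible_reward P Pi z rhat -> 0 < eps ->
  U1 P Pi z mu rhat eps r -> U1 P Pi z mu rhat eps rstar ->
  Pi beta -> Pi pi ->
  Jr P (z beta) rstar <= Jr P (z pi) rstar ->
  ((Jr P (z beta) r - Jr P (z pi) r)%:E <= (2 * eps)%:E * Crel P z mu beta pi)%E.
Proof.
move=> hmu mmu [mrh _] eps0 [[mr ir] hU1] [[ms iss] hU2] Pb Pp hJ.
set f := fun x => (normInfw (mu x) (fun y => z beta x y - z pi x y))%:E.
have P0 : (0 < P [set: X])%E by rewrite probability_setT.
have C0 : (0 <= Crel P z mu beta pi)%E.
  by apply: ess_sup_gee => //; apply: nearW => x; rewrite lee_fin normInfw_ge0.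
have hae := ess_sup_ge P f.
rewrite /Crel -/f in C0 *.
move: C0 hae; case: (ess_sup P f) => [c| |] // C0 hae; last first.
  rewrite mulry gtr0_sg ?mulr_gt0 // mul1e; exact: leey.
rewrite lee_fin in C0.
have ibr := ir beta Pb; have ipr := ir pi Pp.
have ibs := iss beta Pb; have ips := iss pi Pp.
set g := fun x => (dotY (fun y => z beta x y - z pi x y) (fun y => r x y - rstar x y))%:E.
have ge : g = (fun x => ((dotY (z beta x) (r x))%:E - (dotY (z pi x) (r x))%:E)
                 - ((dotY (z beta x) (rstar x))%:E - (dotY (z pi x) (rstar x))%:E))%E.
  by apply/funext => x; rewrite /g dotY_lin !EFinB.
have ig : P.-integrable setT g by rewrite ge; apply: integrableB => //; apply: integrableB.
have Ieq : (\int[P]_x g x = (Jr P (z beta) r - Jr P (z pi) r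
                 - (Jr P (z beta) rstar - Jr P (z pi) rstar))%:E)%E.
  rewrite ge integralB //; try (apply: integrableB => //).
  rewrite !integralB // /Jr !EFinB !fineK //; exact: integrable_fin_num.
apply: (le_trans (y := (Jr P (z beta) r - Jr P (z pi) r
                 - (Jr P (z beta) rstar - Jr P (z pi) rstar))%:E)).
  by rewrite lee_fin; lra.
rewrite -Ieq.
apply: (le_trans (lee_abs _)).
apply: (le_trans (le_abse_integral P measurableT (measurable_int _ ig))).
set h1 := fun x => norm1w (mu x) (fun y => r x y - rhat x y).
set h2 := fun x => norm1w (mu x) (fun y => rstar x y - rhat x y).
have mh1 : measurable_fun setT h1 by apply: meas_n1.
have mh2 : measurable_fun setT h2 by apply: meas_n1.
have h1ge x : 0 <= h1 x.
  by rewrite /h1 /h2 /norm1w; apply: sumr_ge0 => y _; apply: mulr_ge0; [exact: ltW | exact: normr_ge0].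
have h2ge x : 0 <= h2 x.
  by rewrite /h1 /h2 /norm1w; apply: sumr_ge0 => y _; apply: mulr_ge0; [exact: ltW | exact: normr_ge0].
have mE1 := proj2 (measurable_realfun.measurable_EFinP _ _) mh1.
have mE2 := proj2 (measurable_realfun.measurable_EFinP _ _) mh2.
apply: (le_trans (y := (\int[P]_x ((c%:E * ((h1 x)%:E + (h2 x)%:E))))%E)).
  apply: ae_ge0_le_integral => //.
  - exact: (measurable_int P (integrable_abse ig)).
  - by move=> x _; rewrite mule_ge0 ?adde_ge0 ?lee_fin.
  - by apply: emeasurable_funM => //; exact: emeasurable_funD.
  apply: filterS hae => x hx _.
  rewrite /g -EFinD -EFinM lee_fin.
  apply: (le_trans (dot_bound _ _ _ (hmu x))).
  apply: ler_pM => //; first exact: normInfw_ge0.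
    by rewrite /h1 /h2 /norm1w; apply: sumr_ge0 => y _; apply: mulr_ge0; [exact: ltW | exact: normr_ge0].
  exact: norm1w_tri.
rewrite ge0_integralZl //; last first.
  by move=> x _; rewrite adde_ge0 ?lee_fin.
  by exact: emeasurable_funD.
rewrite ge0_integralD //; try (by move=> x _; rewrite lee_fin); try exact: mE1; try exact: mE2.
rewrite muleC; apply: lee_wpmul2r; first by rewrite lee_fin.
rewrite EFinM; have -> : (2%:E * eps%:E = eps%:E + eps%:E)%E by rewrite -EFinM -EFinD; congr EFin; ring.
by apply: leeD.
Qed.
End K.

Theorem mainTheorem16
  (d : measure_display) (X : measurableType d) (R : realType) (Y : finType)
  (P : probability X R)
  (Pol : Type) (Pi : set Pol) (z : Pol -> X -> Y -> R)
  (mu : X -> Y -> R) (rhat rstar : X -> Y -> R) (eps : R)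
  (piStar piDRRO : Pol) :
  Pi !=set0 ->
  (forall pi, Pi pi -> forall y, measurable_fun setT (fun x => z pi x y)) ->
  (forall pi, Pi pi -> exists M : R, forall x y, `|z pi x y| <= M) ->
  (forall x y, 0 < mu x y) ->
  (forall x, \sum_(y : Y) mu x y = 1) ->
  (forall y, measurable_fun setT (fun x => mu x y)) ->
  admissible_reward P Pi z rhat ->
  0 < eps ->
  (forall r, U1 P Pi z mu rhat eps r -> exists pi, is_argmax P Pi z r pi) ->
  U1 P Pi z mu rhat eps rstar ->
  is_argmax P Pi z rstar piStar ->
  Pi piDRRO ->
  (forall pi, Pi pi ->
     (worst_regret P Pi z (U1 P Pi z mu rhat eps) piDRRO
        <= worst_regret P Pi z (U1 P Pi z mu rhat eps) pi)%E) ->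
  ((Jr P (z piStar) rstar - Jr P (z piDRRO) rstar)%:E
     <= (2 * eps)%:E * CrelU P Pi z mu (U1 P Pi z mu rhat eps) piStar)%E.
Proof.
move=> _ _ _ hmu _ mmu adm eps0 hex Us [Ps hmaxs] PD hopt.
apply: (@le_trans _ _ (worst_regret P Pi z (U1 P Pi z mu rhat eps) piDRRO)).
  rewrite EFinB; apply: (le_trans _ (ereal_sup_ubound _)); last first.
    by exists rstar.
  apply: leeB => //.
  by apply: ereal_sup_ubound; exists piStar.
apply: (le_trans (hopt _ Ps)).
apply: ge_ereal_sup => _ [r Ur <-].
have [beta [Pb hmax]] := hex r Ur.
apply: (@le_trans _ _ ((Jr P (z beta) r)%:E - (Jr P (z piStar) r)%:E)%E).
  apply: leeB => //.
  by apply: ge_ereal_sup => _ [b Pb' <-]; rewrite lee_fin; exact: hmax.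
rewrite -EFinB.
apply: (le_trans (@key _ _ _ _ P _ Pi z mu rhat r rstar eps beta piStar hmu mmu adm eps0 Ur Us Pb Ps (hmaxs _ Pb))).
apply: lee_wpmul2l; first by rewrite lee_fin mulr_ge0 // ltW.
apply: ereal_sup_ubound; exists beta => //.
by exists r => //; split.
Qed.
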